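(* Let $f_1,\dots,f_m:\mathbb R^n\to\mathbb R$ be continuously differentiable with $\nabla f_j$ being $L_j$-Lipschitz, and set $L=\max_j L_j$. Let $\tau>0$, $x,y\in\mathbb R^n$, and let $$\lambda_\tau(x,y)\in\operatorname*{argmin}_{\lambda\in\Delta_m}\Big\{\langle\lambda,F(x)-F(y)\rangle+\frac{\tau}{2}\|DF(y)\lambda\|^2\Big\}$$ be any minimizer. Then $$\Big\|DF(y)\lambda_\tau(x,y)-\mathrm{proj}_{C(y)}\Big(\frac{y-x}{\tau}\Big)\Big\|\le\sqrt{\frac{2L}{\tau}}\,\|x-y\|.$$
   Context: $F=(f_1,\dots,f_m)^\top$. $\Delta_m=\{\lambda\in\mathbb R^m_{\ge0}:\sum_j\lambda_j=1\}$ is the unit simplex. $DF(y)=[\nabla f_1(y),\dots,\nabla f_m(y)]\in\mathbb R^{n\times m}$, so $DF(y)\lambda=\sum_j\lambda_j\nabla f_j(y)$. $C(y)=\mathrm{conv}\{\nabla f_1(y),\dots,\nabla f_m(y)\}$, and $\mathrm{proj}_C(v)$ is the Euclidean projection of $v$ onto the closed convex set $C$. *)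

(* Defs.v *)
From HB Require Import structures.
From mathcomp Require Import all_boot all_order all_algebra.
From mathcomp Require Import all_classical all_reals all_analysis.
Set Implicit Arguments. Unset Strict Implicit. Unset Printing Implicit Defensive.
Import Order.TTheory GRing.Theory Num.Theory.
Import numFieldNormedType.Exports.
Local Open Scope classical_set_scope.
Local Open Scope ring_scope.

Section Defs.
Variable R : realType.

(* Euclidean inner product and Euclidean norm (the library norm on 'rV is
   the sup norm, so we define the Euclidean one explicitly). *)
Definition dotv n (u v : 'rV[R]_n) : R := \sum_(i < n) u 0 i * v 0 i.
Definition enorm n (u : 'rV[R]_n) : R := Num.sqrt (dotv u u).

Definition grad n (f : 'rV[R]_n -> R) (x : 'rV[R]_n) : 'rV[R]_n :=
  \row_(i < n) ('d f x (delta_mx 0 i : 'rV[R]_n)).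

Definition C1 n (f : 'rV[R]_n -> R) : Prop :=
  (forall x, differentiable f x) /\ continuous (grad f).

Definition lipschitz_e n (g : 'rV[R]_n -> 'rV[R]_n) (L : R) : Prop :=
  forall a b, enorm (g a - g b) <= L * enorm (a - b).

Definition simplex m : set 'rV[R]_m :=
  [set l | (forall j, 0 <= l 0 j) /\ \sum_(j < m) l 0 j = 1].

Definition Fvec m n (f : 'I_m -> 'rV[R]_n -> R) (x : 'rV[R]_n) : 'rV[R]_m :=
  \row_(j < m) f j x.

Definition DFmul m n (f : 'I_m -> 'rV[R]_n -> R) (y : 'rV[R]_n)
  (l : 'rV[R]_m) : 'rV[R]_n := \sum_(j < m) l 0 j *: grad (f j) y.

Definition Cset m n (f : 'I_m -> 'rV[R]_n -> R) (y : 'rV[R]_n) : set 'rV[R]_n :=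
  [set v | exists2 l, simplex l & v = \sum_(j < m) l 0 j *: grad (f j) y].

(* p = proj_C(v): Euclidean nearest point of C to v (unique when C is
   nonempty closed convex). *)
Definition is_proj n (C : set 'rV[R]_n) (v p : 'rV[R]_n) : Prop :=
  C p /\ forall q, C q -> enorm (v - p) <= enorm (v - q).

Definition obj m n (f : 'I_m -> 'rV[R]_n -> R) (tau : R) (x y : 'rV[R]_n)
  (l : 'rV[R]_m) : R :=
  dotv l (Fvec f x - Fvec f y) + tau / 2 * (enorm (DFmul f y l)) ^+ 2.

Definition is_argmin_simplex m (phi : 'rV[R]_m -> R) (l : 'rV[R]_m) : Prop :=
  simplex l /\ forall l', simplex l' -> phi l <= phi l'.

End Defs.

(* Main.v *)
Require Import Defs.
From HB Require Import structures.
From mathcomp Require Import all_boot all_order all_algebra.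
From mathcomp Require Import all_classical all_reals all_analysis.
From mathcomp Require Import ring lra.
Import Order.TTheory GRing.Theory Num.Theory.
Import numFieldNormedType.Exports.
Local Open Scope classical_set_scope.
Local Open Scope ring_scope.

Section S.
Variable R : realType.
Variable n : nat.
Implicit Types u v w : 'rV[R]_n.

Lemma dotvC u v : dotv u v = dotv v u.
Proof. by apply: eq_bigr => i _; rewrite mulrC. Qed.
Lemma dotvDl u v w : dotv (u + v) w = dotv u w + dotv v w.
Proof. by rewrite /dotv -big_split; apply: eq_bigr => i _; rewrite !mxE mulrDl. Qed.
Lemma dotvZl (c : R) u w : dotv (c *: u) w = c * dotv u w.
Proof. by rewrite /dotv mulr_sumr; apply: eq_bigr => i _; rewrite !mxE mulrA. Qed.
Lemma dotvNl u w : dotv (- u) w = - dotv u w.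
Proof. by rewrite -scaleN1r dotvZl mulN1r. Qed.
Lemma dotvBl u v w : dotv (u - v) w = dotv u w - dotv v w.
Proof. by rewrite dotvDl dotvNl. Qed.
Lemma dotvDr u v w : dotv w (u + v) = dotv w u + dotv w v.
Proof. by rewrite dotvC dotvDl !(dotvC w). Qed.
Lemma dotvZr (c : R) u w : dotv w (c *: u) = c * dotv w u.
Proof. by rewrite dotvC dotvZl dotvC. Qed.
Lemma dotvBr u v w : dotv w (u - v) = dotv w u - dotv w v.
Proof. by rewrite dotvC dotvBl !(dotvC w). Qed.
Lemma dotv_suml m (F : 'I_m -> 'rV[R]_n) w :
  dotv (\sum_(j < m) F j) w = \sum_(j < m) dotv (F j) w.
Proof.
elim/big_ind2: _ => //; last by move=> a b c d <- <-; rewrite dotvDl.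
by rewrite /dotv big1 // => i _; rewrite mxE mul0r.
Qed.
Lemma dotv_ge0 u : 0 <= dotv u u.
Proof. by apply: sumr_ge0 => i _; rewrite -expr2 sqr_ge0. Qed.
Lemma enorm_sqr u : enorm u ^+ 2 = dotv u u.
Proof. by rewrite sqr_sqrtr // dotv_ge0. Qed.
Lemma enorm_ge0 u : 0 <= enorm u.
Proof. exact: sqrtr_ge0. Qed.
Lemma dotv0 u : dotv u u = 0 -> u = 0.
Proof.
move=> h; apply/rowP => i; rewrite mxE.
have /psumr_eq0P H : \sum_(i < n) u 0 i * u 0 i = 0 by [].
have := H (fun j _ => ltac:(by rewrite -expr2 sqr_ge0)) i isT.
by rewrite -expr2 => /eqP; rewrite sqrf_eq0 => /eqP.
Qed.
Lemma dotv0r u : dotv u 0 = 0.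
Proof. by rewrite /dotv big1 // => i _; rewrite mxE mulr0. Qed.
Lemma CS u w : dotv u w <= enorm u * enorm w.
Proof.
have [/dotv0 ->|hu] := eqVneq (dotv u u) 0.
  by rewrite dotvC dotv0r mulr_ge0 // enorm_ge0.
have [/dotv0 ->|hw] := eqVneq (dotv w w) 0.
  by rewrite dotv0r mulr_ge0 // enorm_ge0.
have ha : 0 < enorm u by rewrite sqrtr_gt0 lt_def hu dotv_ge0.
have hb : 0 < enorm w by rewrite sqrtr_gt0 lt_def hw dotv_ge0.
have := dotv_ge0 (enorm w *: u - enorm u *: w).
rewrite !(dotvBl, dotvBr, dotvZl, dotvZr) -!enorm_sqr (dotvC w u).
set a := enorm u; set b := enorm w; set c := dotv u w => h.
have hab : 0 < a * b by rewrite mulr_gt0.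
rewrite -subr_ge0; have : 0 <= (a * b) * (a * b - c) *+ 2.
  by move: h; congr (_ <= _); ring.
by rewrite pmulrn_lge0 // pmulr_rge0.
Qed.
Lemma diff_dot (f : 'rV[R]_n -> R) z d : 'd f z d = dotv (grad f z) d.
Proof.
rewrite {1}(row_sum_delta d) linear_sum /dotv; apply: eq_bigr => i _.
by rewrite linearZ /= mxE mulrC.
Qed.

Lemma phi_derive (f : 'rV[R]_n -> R) (y d : 'rV[R]_n) (t : R) :
  (forall x, differentiable f x) ->
  is_derive t 1 (fun s : R => f (s *: d + y)) (dotv (grad f (t *: d + y)) d).
Proof.
move=> hd.
have E : (fun h : R => h^-1 *: (((fun s : R => f (s *: d + y)) \o shift t) (h *: 1) - f (t *: d + y)))
  = (fun h : R => h^-1 *: ((f \o shift (t *: d + y)) (h *: d) - f (t *: d + y))).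
  apply/funext => h /=; congr (_ *: (f _ - _)).
  by rewrite /shift /= scalerDl addrA -[h *: 1]/(h * 1) mulr1.
have der : derivable (fun s : R => f (s *: d + y)) t 1.
  rewrite /derivable E; have := @diff_derivable _ _ _ f (t *: d + y) d (hd _); exact.
apply: DeriveDef => //.
rewrite /derive E -/(derive f (t *: d + y) d) deriveE //.
exact: diff_dot.
Qed.
Lemma psi_derive (f : 'rV[R]_n -> R) (y d : 'rV[R]_n) (a c t : R) :
  (forall x, differentiable f x) ->
  is_derive t 1 ((fun s : R => f (s *: d + y)) - a \*: (id : R -> R) - c \*: ((id : R -> R) * id))
    (dotv (grad f (t *: d + y)) d - a - c * (t + t)).
Proof.
move=> hd.
have H1 := phi_derive f y d t hd.
have H2 : is_derive t (1:R) (a \*: (id : R -> R)) (a *: 1) by exact: is_deriveZ.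
have H3 : is_derive t (1:R) (c \*: ((id : R -> R) * id)) (c *: (t *: 1 + t *: 1)).
  by apply: is_deriveZ; apply: is_deriveM.
have := is_deriveB (is_deriveB H1 H2) H3.
move=> H; apply: (is_derive_eq H).
by rewrite /GRing.scale /= !mulr1.
Qed.
Lemma enormZ (c : R) u : enorm (c *: u) = `|c| * enorm u.
Proof.
by rewrite /enorm dotvZl dotvZr mulrA -expr2 sqrtrM ?sqr_ge0 // sqrtr_sqr.
Qed.

Lemma dot_expand u v (t : R) :
  dotv (u - t *: v) (u - t *: v) = dotv u u - (t + t) * dotv u v + t ^+ 2 * dotv v v.
Proof. rewrite !(dotvBl, dotvBr, dotvZl, dotvZr) (dotvC v u); ring. Qed.

Lemma enormN u : enorm (- u) = enorm u.
Proof. by rewrite -scaleN1r enormZ normrN1 mul1r. Qed.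

Lemma descent_gen (f : 'rV[R]_n -> R) (K : R) (y d : 'rV[R]_n) (sg : R) :
  (sg = 1 \/ sg = -1) ->
  (forall x, differentiable f x) -> lipschitz_e (grad f) K ->
  sg * (f (d + y) - f y - dotv (grad f y) d) <= K / 2 * dotv d d.
Proof.
move=> hsg hd hL.
set a := dotv (grad f y) d.
set c := sg^-1 * (K / 2 * dotv d d).
set psi := ((fun s : R => f (s *: d + y)) - a \*: (id : R -> R) - c \*: ((id : R -> R) * id)).
have hpsi t := psi_derive f y d a c t hd.
have cont : {within `[0, 1], continuous psi}.
  apply: derivable_within_continuous => t _.
  exact: (@ex_derive _ _ _ _ _ _ _ (hpsi t)).
have [t0 ht0 E] := MVT_segment ler01 (fun t _ => hpsi t) cont.
move: E; rewrite !fctE /= scale1r scale0r add0r /GRing.scale /= !mulr1 !mulr0 !subr0.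
move=> E.
have ht0' : 0 <= t0 by move: ht0; rewrite in_itv /= => /andP[].
have key : sg * (dotv (grad f (t0 *: d + y)) d - a) <= K * t0 * dotv d d.
  rewrite /a -dotvBl.
  have hcs : sg * dotv (grad f (t0 *: d + y) - grad f y) d <=
      enorm (grad f (t0 *: d + y) - grad f y) * enorm d.
    case: hsg => ->; first by rewrite mul1r CS.
    by rewrite mulN1r -dotvNl -(enormN (grad f (t0 *: d + y) - grad f y)) CS.
  apply: (le_trans hcs).
  have := hL (t0 *: d + y) y; rewrite addrK enormZ ger0_norm // => hl.
  apply: le_trans (ler_wpM2r (enorm_ge0 _) hl) _.
  by rewrite -enorm_sqr expr2 !mulrA lexx.
have hsc : sg * c = K / 2 * dotv d d.
  by rewrite /c mulrA mulfV ?mul1r //; case: hsg => ->; rewrite ?oner_eq0 ?oppr_eq0 ?oner_eq0.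
have -> : f (d + y) - f y - a = (dotv (grad f (t0 *: d + y)) d - a) - c * (t0 + t0) + c.
  by move: E; rewrite mulr1 => <-; ring.
set X := dotv (grad f (t0 *: d + y)) d - a.
have -> : sg * (X - c * (t0 + t0) + c) = sg * X - (sg * c) * (t0 + t0) + sg * c by ring.
rewrite hsc.
have h2 : K / 2 * dotv d d * (t0 + t0) = K * t0 * dotv d d by field.
rewrite h2 /X; lra.
Qed.

End S.

Theorem mainTheorem3 (R : realType) (m n : nat)
  (f : 'I_m -> 'rV[R]_n -> R) (Lj : 'I_m -> R)
  (hC1 : forall j, C1 (f j))
  (hLip : forall j, lipschitz_e (grad (f j)) (Lj j))
  (tau : R) (htau : 0 < tau) (x y : 'rV[R]_n) (lam : 'rV[R]_m)
  (hlam : is_argmin_simplex (obj f tau x y) lam)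
  (p : 'rV[R]_n) (hp : is_proj (Cset f y) (tau^-1 *: (y - x)) p) :
  let L := \big[Num.max/0]_(j < m) Lj j in
  enorm (DFmul f y lam - p) <= Num.sqrt (2 * L / tau) * enorm (x - y).
Proof.
cbv zeta; set L := \big[Num.max/0]_(j < m) Lj j.
have hL0 : 0 <= L.
  by rewrite /L; elim/big_rec: _ => // i a _ ha; rewrite le_max ha orbT.
have hLj j : Lj j <= L by rewrite /L (bigD1 j) //= le_max lexx.
have hLipL j : lipschitz_e (grad (f j)) L.
  move=> a b; apply: (le_trans (hLip j a b)); apply: ler_wpM2r; [exact: enorm_ge0|exact: hLj].
set d := x - y.
set G := fun j => grad (f j) y.
set e := fun j => f j x - f j y - dotv (G j) d.
set K := L / 2 * dotv d d.
have hxy : d + y = x by rewrite /d subrK.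
have he_up j : e j <= K.
  have := @descent_gen R n (f j) L y d 1 (or_introl erefl) (proj1 (hC1 j)) (hLipL j).
  by rewrite hxy mul1r.
have he_lo j : - K <= e j.
  have := @descent_gen R n (f j) L y d (-1) (or_intror erefl) (proj1 (hC1 j)) (hLipL j).
  by rewrite hxy mulN1r lerNl.
have hobj nu : obj f tau x y nu =
    dotv (DFmul f y nu) d + \sum_(j < m) nu 0 j * e j + tau / 2 * dotv (DFmul f y nu) (DFmul f y nu).
  rewrite /obj enorm_sqr; congr (_ + _).
  rewrite /DFmul dotv_suml -big_split /dotv; apply: eq_bigr => j _.
  rewrite !mxE /e /dotv -/(dotv (G j) d) -/(dotv (nu 0 j *: G j) d) dotvZl.
  by change (nu 0 j * (f j x - f j y) = nu 0 j * dotv (G j) d + nu 0 j * (f j x - f j y - dotv (G j) d)); ring.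
have hsum_up nu : simplex nu -> \sum_(j < m) nu 0 j * e j <= K.
  move=> [h0 h1]; apply: (@le_trans _ _ (\sum_(j < m) nu 0 j * K)).
    by apply: ler_sum => j _; apply: ler_wpM2l.
  by rewrite -mulr_suml h1 mul1r.
have hsum_lo nu : simplex nu -> - K <= \sum_(j < m) nu 0 j * e j.
  move=> [h0 h1]; apply: (@le_trans _ _ (\sum_(j < m) nu 0 j * - K)).
    by rewrite -mulr_suml h1 mul1r.
  by apply: ler_sum => j _; apply: ler_wpM2l.
case: hp => [[mu hmu hpmu] hproj].
case: hlam => hlamS hlamM.
set g := DFmul f y lam.
have star := hlamM mu hmu.
rewrite !hobj in star.
have hmuP : DFmul f y mu = p by rewrite hpmu.
rewrite hmuP in star.
have hv : tau^-1 *: (y - x) = - (tau^-1 *: d) by rewrite /d -scalerN opprB.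
rewrite hv in hproj.
set v := - (tau^-1 *: d).
set w := v - p; set z := g - p.
have hq t : 0 <= t <= 1 -> dotv w w <= dotv w w - (t + t) * dotv w z + t ^+ 2 * dotv z z.
  move=> /andP[t0 t1].
  have Cq : Cset f y (p + t *: z).
    exists ((1 - t) *: mu + t *: lam).
      split.
        move=> j; rewrite !mxE; apply: addr_ge0; apply: mulr_ge0 => //.
        - by rewrite subr_ge0.
        - exact: (proj1 hmu j).
        - exact: (proj1 hlamS j).
      under eq_bigr => j _ do rewrite !mxE.
      rewrite big_split /= -!mulr_sumr (proj2 hmu) (proj2 hlamS); ring.
    rewrite /z /g hpmu /DFmul.
    under [RHS]eq_bigr => j _ do rewrite !mxE scalerDl -!scalerA.
    rewrite big_split /= -!scaler_sumr.
    set P := \sum_(j < m) mu 0 j *: _; set Q := \sum_(j < m) lam 0 j *: _.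
    by rewrite scalerBr scalerBl scale1r addrCA [RHS]addrC.
  have := hproj _ Cq.
  rewrite /enorm ler_sqrt ?dotv_ge0 //.
  have -> : v - (p + t *: z) = w - t *: z by rewrite opprD addrA.
  by rewrite dot_expand.
have hA : dotv w z <= 0.
  rewrite leNgt; apply/negP => hA.
  set A := dotv w z in hq hA; set B := dotv z z in hq.
  have hB : 0 <= B by apply: dotv_ge0.
  have hAB : 0 < A + B by apply: ltr_wpDr.
  set t := A / (A + B).
  have ht0 : 0 <= t by apply: divr_ge0; apply: ltW.
  have ht1 : t <= 1 by rewrite ler_pdivrMr // mul1r lerDl.
  have := hq t; rewrite ht0 ht1 => /(_ isT) h.
  have ht : 0 < t by apply: divr_gt0.
  have h1 : t * (A + A) <= t * (t * B).
    by move: h; rewrite expr2; set W := dotv w w; lra.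
  rewrite ler_pM2l // in h1.
  have h2 : t * B <= A.
    rewrite /t mulrAC ler_pdivrMr // mulrDr lerDr.
    by apply: mulr_ge0; apply: ltW.
  lra.
have hSmu := hsum_up mu hmu.
have hSlam := hsum_lo lam hlamS.
rewrite -/g in star.
have eA : dotv w z = - tau^-1 * (dotv g d - dotv p d) - (dotv g p - dotv p p).
  rewrite /w /z /v !(dotvBl, dotvBr, dotvNl, dotvZl).
  rewrite (dotvC _ _ x g) (dotvC _ _ y g) (dotvC _ _ x p) (dotvC _ _ y p) (dotvC _ _ p g); ring.
have eZ : dotv z z = dotv g g - (dotv g p + dotv g p) + dotv p p.
  rewrite /z !(dotvBl, dotvBr) (dotvC _ _ p g); ring.
have hA2 : tau * dotv w z = - (dotv g d - dotv p d) - tau * (dotv g p - dotv p p).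
  by rewrite eA; field; rewrite gt_eqF.
have hA3 : tau * dotv w z <= 0 by rewrite pmulr_rle0.
have key : tau / 2 * dotv z z <= L * dotv d d.
  move: star hSmu hSlam hA2 hA3; rewrite eZ /K.
  set gd := dotv g d; set pd := dotv p d; set gg := dotv g g; set gp := dotv g p.
  set pp := dotv p p; set dd := dotv d d; set A := dotv w z.
  set S1 := \sum_(j < m) lam 0 j * e j; set S2 := \sum_(j < m) mu 0 j * e j.
  move=> *.
  nra.
have hz : dotv z z <= 2 * L / tau * dotv d d.
  have e1 : dotv z z = 2 / tau * (tau / 2 * dotv z z) by field; rewrite gt_eqF.
  have e2 : 2 * L / tau * dotv d d = 2 / tau * (L * dotv d d) by field; rewrite gt_eqF.
  rewrite e1 e2; apply: ler_wpM2l => //.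
  by apply: divr_ge0 => //; apply: ltW.
have hc : 0 <= 2 * L / tau by apply: divr_ge0; [apply: mulr_ge0|apply: ltW].
rewrite /enorm -sqrtrM // ler_sqrt //.
by apply: mulr_ge0 => //; apply: dotv_ge0.
Qed.
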